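(* Let $f:\mathbb{R}^d\times\mathcal{X}\to\mathbb{R}$ be differentiable in $\theta$, with $\mathcal{X}$ a subset of a Euclidean space and $\sup_{x\in\mathcal{X}}\Vert x\Vert\le D<\infty$, and assume (A1): there are $K_1,K_2>0$ with $\Vert\nabla f(\theta,x)-\nabla f(\hat\theta,\hat x)\Vert\le K_1\Vert\theta-\hat\theta\Vert+K_2\Vert x-\hat x\Vert(\Vert\theta\Vert+\Vert\hat\theta\Vert+1)$ for all $\theta,\hat\theta\in\mathbb{R}^d$, $x,\hat x\in\mathcal{X}$. Let $X_n=(x_1,\dots,x_n)$, $\hat X_n=(\hat x_1,\dots,\hat x_n)\in\mathcal{X}^n$ differ in at most one index, $b\in\{1,\dots,n\}$, $\eta>0$, and let $P,\hat P$ be the transition kernels of the SGD chains $\theta_k=\theta_{k-1}-\frac\eta b\sum_{i\in\Omega_k}\nabla f(\theta_{k-1},x_i)$ and $\hat\theta_k=\hat\theta_{k-1}-\frac\eta b\sum_{i\in\Omega_k}\nabla f(\hat\theta_{k-1},\hat x_i)$, where $(\Omega_k)$ are i.i.d. uniformly random $b$-subsets of $\{1,\dots,n\}$. Let $\hat\theta_*$ be a minimizer of $\hat F(\theta,\hat X_n):=\frac1n\sum_{i=1}^nf(\theta,\hat x_i)$ and $\hat V(\theta)=1+\Vert\theta-\hat\theta_*\Vert^2$. Then $$\sup_{\theta\in\mathbb{R}^d}\frac{\mathcal{W}_1(\delta_\theta P,\delta_\theta\hat P)}{\hat V(\theta)}\le\frac{4DK_2\eta}{n}\left(2\Vert\h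at\theta_*\Vert+1\right).$$
   Context: $\delta_\theta P=P(\theta,\cdot)$; $\mathcal{W}_1$ is the 1-Wasserstein distance. *)

(* Defs.v *)
From mathcomp Require Import all_boot all_order all_algebra.
From mathcomp Require Import all_classical all_reals all_analysis.
From mathcomp Require Import matrix_topology matrix_normedtype.
Import numFieldNormedType.Exports.
Set Implicit Arguments. Unset Strict Implicit. Unset Printing Implicit Defensive.
Import Order.TTheory GRing.Theory Num.Theory.
Local Open Scope ring_scope.
Local Open Scope classical_set_scope.

Definition enorm {R : realType} {m : nat} (v : 'rV[R]_m) : R :=
  Num.sqrt (\sum_(i < m) v ord0 i ^+ 2).

Definition edist {R : realType} {m : nat} (u v : 'rV[R]_m) : R := enorm (u - v).

Definition borelRV (R : realType) (d : nat) :=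
  g_sigma_algebraType (open : set (set 'rV[R]_d)).

Definition grad {R : realType} {d : nat} (g : 'rV[R]_d -> R) (t : 'rV[R]_d)
  : 'rV[R]_d :=
  \row_(i < d) ('D_(delta_mx 0 i) g t).

Definition emp_risk {R : realType} {d m n : nat}
  (f : 'rV[R]_d -> 'rV[R]_m -> R) (X : 'I_n -> 'rV[R]_m) (t : 'rV[R]_d) : R :=
  n%:R^-1 * \sum_(i < n) f t (X i).

Definition sgd_step {R : realType} {d m n : nat} (eta : R) (b : nat)
  (f : 'rV[R]_d -> 'rV[R]_m -> R) (X : 'I_n -> 'rV[R]_m)
  (t : 'rV[R]_d) (Om : {set 'I_n}) : 'rV[R]_d :=
  t - (eta / b%:R) *: \sum_(i in Om) grad (f ^~ (X i)) t.

(* delta_theta P : the law of the next SGD iterate started at theta, where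
   the minibatch Omega is uniform among the b-subsets of {1,...,n}. *)
Definition sgd_kernel {R : realType} {d m n : nat} (eta : R) (b : nat)
  (f : 'rV[R]_d -> 'rV[R]_m -> R) (X : 'I_n -> 'rV[R]_m) (t : 'rV[R]_d)
  : set (borelRV R d) -> \bar R :=
  fun A => (\sum_(Om : {set 'I_n} | #|Om| == b)
              ((('C(n, b))%:R)^-1)%:E
              * \d_(sgd_step eta b f X t Om : borelRV R d) A)%E.

Definition coupling {R : realType} {d : nat}
  (mu nu : set (borelRV R d) -> \bar R)
  (pi : probability (borelRV R d * borelRV R d)%type R) : Prop :=
  (forall A, measurable A -> pi (A `*` setT) = mu A) /\
  (forall B, measurable B -> pi (setT `*` B) = nu B).

Definition W1 {R : realType} {d : nat} (mu nu : set (borelRV R d) -> \bar R)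
  : \bar R :=
  ereal_inf [set (\int[pi]_z (edist (z.1 : 'rV[R]_d) (z.2 : 'rV[R]_d))%:E)%E
            | pi in [set pi | coupling mu nu pi]].

(* Main.v *)
Require Import Defs.
From mathcomp Require Import all_boot all_order all_algebra.
From mathcomp Require Import all_classical all_reals all_analysis.
From mathcomp Require Import matrix_topology matrix_normedtype.
Import numFieldNormedType.Exports.
Import Order.TTheory GRing.Theory Num.Theory.
Local Open Scope ring_scope.
Local Open Scope classical_set_scope.
From mathcomp Require Import ring lra fingroup perm.
Lemma meas_coord (R : realType) d (i : 'I_d) :
  measurable_fun [set: borelRV R d] (fun v : 'rV[R]_d => v ord0 i).
Proof.
apply: (measurability _ (measurable_realfun.RGenOpens.measurableE R)).
move=> A [B [a [b ->]] <-]; rewrite setTI.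
apply: sub_gen_smallest.
have := @coord_continuous R 1 d ord0 i.
move/continuousP => /(_ _ (@interval_open _ (BRight a) (BLeft b) erefl erefl)).
exact.
Qed.
Lemma meas_edist (R : realType) d :
  measurable_fun [set: (borelRV R d * borelRV R d)%type]
    (fun z : (borelRV R d * borelRV R d)%type => Defs.edist (z.1 : 'rV[R]_d) (z.2 : 'rV[R]_d)).
Proof.
rewrite /Defs.edist /enorm.
apply: (@measurableT_comp _ _ _ _ _ _ (@Num.sqrt R)).
  by apply: measurable_realfun.continuous_measurable_fun; exact: sqrt_continuous.
apply: measurable_sum => k.
apply: (@measurableT_comp _ _ _ _ _ _ (fun r : R => r ^+ 2)).
  by apply: measurable_realfun.continuous_measurable_fun; exact: exprn_continuous.
rewrite /=.
have -> : (fun x : (borelRV R d * borelRV R d)%type => (x.1 - x.2) ord0 k) =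
   (fun x : (borelRV R d * borelRV R d)%type => (x.1 : 'rV[R]_d) ord0 k) \- (fun x : (borelRV R d * borelRV R d)%type => (x.2 : 'rV[R]_d) ord0 k).
  by apply/funext => x; rewrite !mxE.
apply: measurable_realfun.measurable_funB.
  exact: (measurableT_comp (meas_coord R d k) (@measurable_fst _ _ (borelRV R d) (borelRV R d))).
exact: (measurableT_comp (meas_coord R d k) (@measurable_snd _ _ (borelRV R d) (borelRV R d))).
Qed.

Local Close Scope ring_scope.
Lemma count_sym n b (j j' : 'I_n) :
  \sum_(Om : {set 'I_n} | #|Om| == b) (j \in Om : nat) =
  \sum_(Om : {set 'I_n} | #|Om| == b) (j' \in Om : nat).
Proof.
pose p := tperm j j'.
have hK : cancel (fun Om : {set 'I_n} => p @: Om) (fun Om => p @: Om).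
  move=> Om; rewrite -imset_comp; rewrite -[RHS]imset_id.
  by apply: eq_imset => x /=; rewrite tpermK.
rewrite (reindex_inj (can_inj hK)) /=.
apply: eq_big => Om.
  by rewrite card_imset //; exact: perm_inj.
move=> _; rewrite -{1}(tpermR j j') -/p mem_imset //; exact: perm_inj.
Qed.

Lemma count_total n b (j : 'I_n) :
  n * \sum_(Om : {set 'I_n} | #|Om| == b) (j \in Om : nat) = b * 'C(n, b).
Proof.
have -> : n * \sum_(Om : {set 'I_n} | #|Om| == b) (j \in Om : nat) =
   \sum_(i < n) \sum_(Om : {set 'I_n} | #|Om| == b) (i \in Om : nat).
  rewrite [RHS](eq_bigr (fun _ => \sum_(Om : {set 'I_n} | #|Om| == b) (j \in Om : nat))).
    by rewrite [RHS]sum_nat_const card_ord.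
  by move=> i _; rewrite (count_sym n b i j).
have E : \sum_(Om : {set 'I_n} | #|Om| == b) \sum_(i < n) (i \in Om : nat) = b * 'C(n, b).
  transitivity (\sum_(Om : {set 'I_n} | #|Om| == b) b).
    apply: (@eq_bigr nat 0 addn) => Om /eqP <-; rewrite -sum1_card [RHS]big_mkcond /=.
    by apply: (@eq_bigr nat 0 addn) => i _; case: (i \in Om).
  rewrite sum_nat_const [RHS]mulnC; congr (_ * _).
  have := card_draws 'I_n b; rewrite card_ord => <-.
  by rewrite cardsE.
by rewrite -E; exact: exchange_big.
Qed.
Local Open Scope ring_scope.
Lemma cs_sum (R : realType) m (u v : 'I_m -> R) :
  (\sum_i u i * v i) ^+ 2 <= (\sum_i u i ^+ 2) * (\sum_i v i ^+ 2).
Proof.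
set A := \sum_i u i ^+ 2; set B := \sum_i v i ^+ 2; set C := \sum_i u i * v i.
have A0 : 0 <= A by apply: sumr_ge0 => i _; exact: sqr_ge0.
have B0 : 0 <= B by apply: sumr_ge0 => i _; exact: sqr_ge0.
have [Az|Ap] := eqVneq A 0.
  have u0 : forall i, u i = 0.
    move=> i; apply/eqP; rewrite -sqrf_eq0; apply/eqP.
    by move/psumr_eq0P: Az => /(_ (fun j _ => sqr_ge0 (u j)) i isT).
  rewrite /C big1 ?expr0n ?mulr_ge0 // => i _; by rewrite u0 mul0r.
have Apos : 0 < A by rewrite lt_def Ap A0.
have H : 0 <= \sum_i (C / A * u i - v i) ^+ 2 by apply: sumr_ge0 => i _; exact: sqr_ge0.
have E : \sum_i (C / A * u i - v i) ^+ 2 = (C / A) ^+ 2 * A - 2 * (C / A) * C + B.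
  rewrite /A /B /C mulr_sumr mulr_sumr -sumrB -big_split /=.
  by apply: eq_bigr => i _; ring.
rewrite E in H.
have : 0 <= A * ((C / A) ^+ 2 * A - 2 * (C / A) * C + B) by apply: mulr_ge0.
have -> : A * ((C / A) ^+ 2 * A - 2 * (C / A) * C + B) = A * B - C ^+ 2.
  by field; rewrite Ap.
by rewrite subr_ge0.
Qed.

Lemma enorm_ge0 (R : realType) m (v : 'rV[R]_m) : 0 <= enorm v.
Proof. exact: sqrtr_ge0. Qed.

Lemma enormD (R : realType) m (u v : 'rV[R]_m) : enorm (u + v) <= enorm u + enorm v.
Proof.
rewrite /enorm.
set A := \sum_i u ord0 i ^+ 2; set B := \sum_i v ord0 i ^+ 2.
have A0 : 0 <= A by apply: sumr_ge0 => i _; exact: sqr_ge0.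
have B0 : 0 <= B by apply: sumr_ge0 => i _; exact: sqr_ge0.
set C := \sum_i u ord0 i * v ord0 i.
have E : \sum_i (u + v) ord0 i ^+ 2 = A + 2 * C + B.
  rewrite /A /B /C mulr_sumr -!big_split /=.
  by apply: eq_bigr => i _; rewrite mxE; ring.
have HC : C <= Num.sqrt A * Num.sqrt B.
  rewrite -sqrtrM //; apply: (le_trans (ler_norm C)).
  rewrite -sqrtr_sqr; rewrite ler_sqrt; first exact: cs_sum.
  exact: mulr_ge0.
rewrite E -[X in _ <= X]ger0_norm ?addr_ge0 ?sqrtr_ge0 //.
rewrite -sqrtr_sqr ler_sqrt ?sqr_ge0 //.
rewrite sqrrD !sqr_sqrtr //; lra.
Qed.

Lemma enormN (R : realType) m (v : 'rV[R]_m) : enorm (- v) = enorm v.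
Proof. by rewrite /enorm; congr Num.sqrt; apply: eq_bigr => i _; rewrite mxE sqrrN. Qed.

Lemma enormZ (R : realType) m (c : R) (v : 'rV[R]_m) : enorm (c *: v) = `|c| * enorm v.
Proof.
rewrite /enorm -sqrtr_sqr -sqrtrM ?sqr_ge0 //; congr Num.sqrt.
rewrite mulr_sumr; apply: eq_bigr => i _; rewrite mxE; ring.
Qed.

Arguments enormD {R m}.
Arguments enorm_ge0 {R m}.
Lemma enorm0 (R : realType) m : enorm (0 : 'rV[R]_m) = 0.
Proof. by rewrite /enorm big1 ?sqrtr0 // => i _; rewrite mxE expr0n. Qed.

Lemma step_bound (R : realType) (d m n b : nat) (Xs : set 'rV[R]_m)
  (D K1 K2 eta : R) (f : 'rV[R]_d -> 'rV[R]_m -> R)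
  (X Xh : 'I_n -> 'rV[R]_m) (j : 'I_n) (t : 'rV[R]_d) (Om : {set 'I_n}) :
  (forall x, Xs x -> enorm x <= D) ->
  (forall (t th : 'rV[R]_d) (x xh : 'rV[R]_m), Xs x -> Xs xh ->
     enorm (grad (f ^~ x) t - grad (f ^~ xh) th)
       <= K1 * enorm (t - th) + K2 * enorm (x - xh) * (enorm t + enorm th + 1)) ->
  (forall i, Xs (X i)) -> (forall i, Xs (Xh i)) ->
  (forall i, i != j -> X i = Xh i) -> 0 < K2 -> 0 < eta ->
  Defs.edist (sgd_step eta b f X t Om) (sgd_step eta b f Xh t Om)
    <= (j \in Om)%:R * (eta / b%:R * (K2 * (2 * D) * (2 * enorm t + 1))).
Proof.
move=> HD Hlip HX HXh Hj K2p etap.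
rewrite /Defs.edist /sgd_step.
set a := eta / b%:R.
set SX := \sum_(i in Om) _; set SXh := \sum_(i in Om) _.
have -> : t - a *: SX - (t - a *: SXh) = a *: (SXh - SX).
  by rewrite scalerBr opprB addrC addrA subrK.
rewrite enormZ.
have a0 : 0 <= a by rewrite /a divr_ge0 // ?ltW.
rewrite ger0_norm //.
have Hb : enorm (grad (f^~ (Xh j)) t - grad (f^~ (X j)) t)
    <= K2 * (2 * D) * (2 * enorm t + 1).
  apply: le_trans (Hlip t t (Xh j) (X j) (HXh j) (HX j)) _.
  rewrite subrr enorm0 mulr0 add0r.
  have HXX : enorm (Xh j - X j) <= 2 * D.
    apply: le_trans (enormD (Xh j) (- X j)) _; rewrite enormN.
    have := HD _ (HX j); have := HD _ (HXh j); lra.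
  have := enorm_ge0 t; have := enorm_ge0 (Xh j - X j).
  move=> h1 h2; rewrite -mulrA -[K2 * (2 * D) * _]mulrA.
  apply: ler_wpM2l; first exact: ltW.
  nra.
have E : SXh - SX = if j \in Om then grad (f^~ (Xh j)) t - grad (f^~ (X j)) t else 0.
  rewrite /SXh /SX -sumrB; case: ifPn => jO.
    rewrite (bigD1 j) //= big1 ?addr0 // => i /andP [_ ij].
    by rewrite (Hj i ij) subrr.
  apply: big1 => i iO; have ij : i != j by apply: contraNneq jO => <-.
  by rewrite (Hj i ij) subrr.
rewrite E; case: ifPn => jO.
  rewrite mul1r; apply: ler_wpM2l => //.
rewrite enorm0 mulr0 mul0r //.
Qed.

Lemma W1_bound (R : realType) (d m n b : nat) (eta : R) (f : 'rV[R]_d -> 'rV[R]_m -> R)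
  (X Xh : 'I_n -> 'rV[R]_m) (t : 'rV[R]_d) (Q : R) (j : 'I_n):
  (0 < b)%N -> (b <= n)%N -> 
  (n * \sum_(Om : {set 'I_n} | #|Om| == b) (j \in Om : nat) = b * 'C(n, b))%N ->
  measurable_fun [set: (borelRV R d * borelRV R d)%type]
    (fun z : (borelRV R d * borelRV R d)%type => Defs.edist (z.1 : 'rV[R]_d) (z.2 : 'rV[R]_d)) ->
  (forall Om : {set 'I_n}, Defs.edist (sgd_step eta b f X t Om) (sgd_step eta b f Xh t Om)
    <= (j \in Om)%:R * Q) ->
  (W1 (sgd_kernel eta b f X t) (sgd_kernel eta b f Xh t) <= (b%:R / n%:R * Q)%:E)%E.
Proof.
move=> b0 bn Hcnt medist Hstep.
set S := [set Om : {set 'I_n} | #|Om| == b]%SET.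
set s := enum S.
have Ns : size s = 'C(n, b).
  by rewrite /s -cardE /S card_draws card_ord.
have Cpos : (0 < 'C(n, b))%N by rewrite bin_gt0.
pose Om0 : {set 'I_n} := [set: 'I_n]%SET.
pose T := (borelRV R d * borelRV R d)%type.
pose pts (k : nat) : T := (sgd_step eta b f X t (nth Om0 s k), sgd_step eta b f Xh t (nth Om0 s k)).
pose mu := msum (fun k => @dirac _ T (pts k) R) (size s).
pose pi := mnormalize mu (@dirac _ T (pts 0%N) R).
have muE : forall A, mu A = (\sum_(k < size s) \1_A (pts k))%:E.
  move=> A; rewrite /mu /msum /= -sumEFin; apply: eq_bigr => k _.
  by rewrite diracE indicE.
have muT : mu setT = (size s)%:R%:E.
  rewrite muE; congr EFin; rewrite (eq_bigr (fun _ => 1)).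
    by rewrite sumr_const card_ord.
  by move=> k _; rewrite indicE in_setT.
have piE : forall A, pi A = (mu A * ((size s)%:R^-1)%:E)%E.
  move=> A; rewrite /pi /mnormalize /= -/mu muT /=.
  rewrite ifF /=; first by []. 
  apply/negbTE; rewrite negb_or; apply/andP; split => //.
  by rewrite eqe pnatr_eq0 Ns -lt0n.
have reidx : forall F : {set 'I_n} -> R,
    \sum_(Om : {set 'I_n} | #|Om| == b) F Om = \sum_(k < size s) F (nth Om0 s k).
  move=> F; rewrite (eq_bigl (fun Om => Om \in S)); last by move=> Om; rewrite inE.
  by rewrite -big_enum (big_nth Om0) big_mkord.
have kerE : forall (Y : 'I_n -> 'rV[R]_m) (A : set (borelRV R d)), sgd_kernel eta b f Y t A =
    (\sum_(k < size s) ('C(n, b)%:R^-1 * \1_A (sgd_step eta b f Y t (nth Om0 s k))))%:E.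
  move=> Y A; rewrite /sgd_kernel.
  under eq_bigr do rewrite diracE -EFinM.
  by rewrite sumEFin reidx.
have Hcoup : coupling (sgd_kernel eta b f X t) (sgd_kernel eta b f Xh t) pi.
  split => A _; rewrite [LHS]piE muE kerE -EFinM; congr EFin;
    rewrite mulr_suml; apply: eq_bigr => k _;
    rewrite [X in _ / X%:R]Ns mulrC !indicE; congr (_ * _%:R).
    by rewrite in_setX in_setT andbT.
  by rewrite in_setX in_setT.
apply: le_trans (ereal_inf_lbound _) _.
  by exists pi.
have c0 : (0 <= (size s)%:R^-1 :> R) by rewrite invr_ge0.
pose c : {nonneg R} := NngNum c0.
have -> : (\int[pi]_z (Defs.edist (z.1 : 'rV[R]_d) (z.2 : 'rV[R]_d))%:E =
     \int[mscale c mu]_z (Defs.edist (z.1 : 'rV[R]_d) (z.2 : 'rV[R]_d))%:E)%E.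
  congr integral; apply/funext => A; rewrite [LHS]piE /mscale /= muleC.
  by [].
rewrite ge0_integral_mscale //; last 2 first.
- exact/measurable_realfun.measurable_EFinP.
- by move=> z _; rewrite lee_fin sqrtr_ge0.
rewrite /mu ge0_integral_measure_sum //; last 2 first.
- by move=> z _; rewrite lee_fin sqrtr_ge0.
- exact/measurable_realfun.measurable_EFinP.
rewrite (eq_bigr (fun k : 'I_(size s) => (Defs.edist (pts k).1 (pts k).2)%:E)); last first.
  move=> k _; rewrite integral_dirac //; last exact/measurable_realfun.measurable_EFinP.
  by rewrite diracT mul1e.
rewrite sumEFin /= -EFinM lee_fin.
apply: (@le_trans _ _ ((size s)%:R^-1 * \sum_(i < size s) (j \in nth Om0 s i)%:R * Q)).
  by apply: ler_wpM2l => //; apply: ler_sum => k _; exact: Hstep.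
rewrite -mulr_suml -(reidx (fun Om => (j \in Om)%:R)).
have -> : \sum_(Om : {set 'I_n} | #|Om| == b) ((j \in Om)%:R : R) =
    (\sum_(Om : {set 'I_n} | #|Om| == b) (j \in Om : nat))%:R.
  by rewrite natr_sum.
set cnt := (\sum_(Om : {set 'I_n} | #|Om| == b) (j \in Om : nat))%N.
have n0 : (0 < n)%N by apply: leq_trans bn.
have Hc : (n%:R * cnt%:R = b%:R * 'C(n, b)%:R :> R) by rewrite -!natrM Hcnt.
have nR : (n%:R != 0 :> R) by rewrite pnatr_eq0 -lt0n.
have CR : ('C(n, b)%:R != 0 :> R) by rewrite pnatr_eq0 -lt0n.
have -> : (cnt%:R : R) = b%:R * 'C(n, b)%:R / n%:R.
  by rewrite -Hc; field.
rewrite Ns le_eqVlt; apply/orP; left; apply/eqP.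
by field; rewrite nR CR.
Qed.

Theorem lemmaC3 (R : realType) (d m n b : nat) (Xs : set 'rV[R]_m)
  (D K1 K2 eta : R) (f : 'rV[R]_d -> 'rV[R]_m -> R)
  (X Xh : 'I_n -> 'rV[R]_m) (thstar : 'rV[R]_d) :
  (forall x, Xs x -> enorm x <= D) ->
  (forall x, Xs x -> forall t : 'rV[R]_d, differentiable (f ^~ x) t) ->
  0 < K1 -> 0 < K2 ->
  (forall (t th : 'rV[R]_d) (x xh : 'rV[R]_m), Xs x -> Xs xh ->
     enorm (grad (f ^~ x) t - grad (f ^~ xh) th)
       <= K1 * enorm (t - th) + K2 * enorm (x - xh) * (enorm t + enorm th + 1)) ->
  (forall i, Xs (X i)) -> (forall i, Xs (Xh i)) ->
  (exists j : 'I_n, forall i, i != j -> X i = Xh i) ->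
  (0 < b)%N -> (b <= n)%N -> 0 < eta ->
  (forall t, emp_risk f Xh thstar <= emp_risk f Xh t) ->
  (ereal_sup [set (W1 (sgd_kernel eta b f X t) (sgd_kernel eta b f Xh t)
                    * ((1 + enorm (t - thstar) ^+ 2)^-1)%:E)%E
             | t in [set: 'rV[R]_d]]
     <= (4 * D * K2 * eta / n%:R * (2 * enorm thstar + 1))%:E)%E.
Proof.
move=> HD Hdiff K1p K2p Hlip HX HXh [j Hj] b0 bn eta0 Hmin.
have D0 : 0 <= D by apply: le_trans (enorm_ge0 (X j)) (HD _ (HX j)).
apply: ub_ereal_sup => _ [t _ <-].
set Q := eta / b%:R * (K2 * (2 * D) * (2 * enorm t + 1)).
have HW := W1_bound R d m n b eta f X Xh t Q j b0 bn (count_total n b j) (meas_edist R d)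
  (fun Om => step_bound R d m n b Xs D K1 K2 eta f X Xh j t Om HD Hlip HX HXh Hj K2p eta0).
set r := enorm (t - thstar).
have r0 : 0 <= r by exact: enorm_ge0.
have c0 : 0 < 1 + r ^+ 2 by have := sqr_ge0 r; lra.
apply: le_trans (lee_wpmul2r _ HW) _; first by rewrite lee_fin invr_ge0 ltW.
rewrite -EFinM lee_fin.
set a := enorm thstar.
have a0 : 0 <= a by exact: enorm_ge0.
have ht : enorm t <= r + a.
  have := enormD (t - thstar) thstar; rewrite subrK; exact.
have t0 : 0 <= enorm t by exact: enorm_ge0.
have n0 : (0 < n)%N by apply: leq_trans bn.
have nR : (0 < n%:R :> R) by rewrite ltr0n.
have bR : (0 < b%:R :> R) by rewrite ltr0n.
set E := eta / n%:R * K2 * D.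
have E0 : 0 <= E by rewrite /E !mulr_ge0 ?divr_ge0 // ltW.
have -> : b%:R / n%:R * Q * (1 + r ^+ 2)^-1 = 2 * E * (2 * enorm t + 1) / (1 + r ^+ 2).
  by rewrite /Q /E; field; rewrite ?gt_eqF.
have -> : 4 * D * K2 * eta / n%:R * (2 * a + 1) = 4 * E * (2 * a + 1).
  by rewrite /E; field; rewrite gt_eqF.
rewrite ler_pdivrMr //.
have H1 : 0 <= 4 * (2 * a + 1) * (1 + r ^+ 2) - 2 * (2 * enorm t + 1).
  have := sqr_ge0 (2 * r - 1); have := mulr_ge0 a0 (sqr_ge0 r); nra.
have := mulr_ge0 E0 H1; nra.
Qed.
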